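(* Let $h(x,u)$ be a symmetric ($h(x,u)=h(u,x)$) polynomial of degree at most two in each of $x,u$, with discriminant $h_u^2-2hh_{uu}=r(x)$. Then: - if $r=0$: either $h=\frac1\alpha(x-u)^2$ for a constant $\alpha$ (q0), or $h=(\gamma_0xu+\gamma_1(x+u)+\gamma_2)^2$ for constants $\gamma_i$ (h1); - if $r=1$: either $h=\frac{1}{2\alpha}(x-u)^2-\frac\alpha2$ (q1), or $h=\gamma_0(x+u)^2+\gamma_1(x+u)+\gamma_2$ with $\gamma_1^2-4\gamma_0\gamma_2=1$ (h2); - if $r=x$: $h=\frac{1}{4\alpha}(x-u)^2-\frac\alpha2(x+u)+\frac{\alpha^3}{4}$ (q2); - if $r=x^2$: $h=\gamma_0x^2u^2+\gamma_1xu+\gamma_2$ with $\gamma_1^2-4\gamma_0\gamma_2=1$ (h3), or $h$ is of the form (q3) below with $\delta=0$; - if $r=x^2-\delta^2$: $h=\frac{\alpha}{1-\alpha^2}(x^2+u^2)-\frac{1+\alpha^2}{1-\alpha^2}xu+\delta^2\frac{1-\alpha^2}{4\alpha}$ (q3); - if $r=4x^3-g_2x-g_3$ with $g_2^3-27g_3^2\neq0$: $h=\frac{1}{\sqrt{r(\alpha)}}\Big[\big(xu+\alpha(x+u)+g_2/4\big)^2-(x+u+\alpha)(4\alpha xu-g_3)\Big]$ (q4). In each case $\alpha$ denotes a constant (for which the expression is defined) and $\sqrt{r(\alpha)}$ denotes either square root.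
   Context: Subscripts denote partial derivatives; $h_u^2-2hh_{uu}$ is the discriminant of $h$ as a quadratic polynomial in $u$ and is a polynomial in $x$ of degree at most four. *)

(* Defs.v *)
From HB Require Import structures.
From mathcomp Require Import all_boot all_order all_algebra.
Set Implicit Arguments. Unset Strict Implicit. Unset Printing Implicit Defensive.
Import Order.TTheory GRing.Theory Num.Theory.
Local Open Scope ring_scope.

(* A bivariate polynomial h(x,u) is an element of {poly {poly C}}:
   the outer variable is u, the inner (coefficient) variable is x. *)

Definition ev2 (C : comNzRingType) (h : {poly {poly C}}) (x u : C) : C :=
  (h.[u%:P]).[x].

Definition deg2_each (C : comNzRingType) (h : {poly {poly C}}) : Prop :=
  (size h <= 3)%N /\ (forall i : nat, (size (h`_i)%R <= 3)%N).

Definition disc (C : comNzRingType) (h : {poly {poly C}}) : {poly {poly C}} :=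
  h^`() ^+ 2 - 2%:R * h * h^`(2).

(* Main.v *)
Require Import Defs.
From HB Require Import structures.
From mathcomp Require Import all_boot all_order all_algebra.
From mathcomp Require Import ring.
Import Order.TTheory GRing.Theory Num.Theory.
Local Open Scope ring_scope.

Section Gen.
Variable C : comNzRingType.

Definition Q3 {R : comNzRingType} (a b c : R) : {poly R} := a%:P + b%:P * 'X + c%:P * 'X^2.
Definition P5 (a b c d e : C) : {poly C} :=
  a%:P + b%:P * 'X + c%:P * 'X^2 + d%:P * 'X^3 + e%:P * 'X^4.

Lemma disc_Q3 (A B D : {poly C}) : disc (Q3 D B A) = (B ^+ 2 - 4%:R * A * D)%:P.
Proof.
rewrite /disc /Q3 derivnS derivn1.
rewrite !(derivD, derivM, derivC, derivX) /=.
ring.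
Qed.

Lemma coefQ3 (R : comNzRingType) (a b c : R) i : (Q3 a b c)`_i = nth 0 [:: a; b; c] i.
Proof.
rewrite /Q3 !coefD !coefCM coefC coefX coefXn.
case: i => [|[|[|i]]] /=; rewrite ?nth_nil; ring.
Qed.

Lemma coefP5 (a b c d e : C) i : (P5 a b c d e)`_i = nth 0 [:: a; b; c; d; e] i.
Proof.
rewrite /P5 !coefD !coefCM coefC coefX !coefXn.
case: i => [|[|[|[|[|i]]]]] /=; rewrite ?nth_nil; ring.
Qed.

Lemma P5_inj a b c d e a' b' c' d' e' :
  P5 a b c d e = P5 a' b' c' d' e' ->
  [/\ a = a', b = b', c = c', d = d' & e = e'].
Proof.
move=> H.
have := congr1 (fun p : {poly C} => p`_0) H; have := congr1 (fun p : {poly C} => p`_1) H.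
have := congr1 (fun p : {poly C} => p`_2) H; have := congr1 (fun p : {poly C} => p`_3) H.
have := congr1 (fun p : {poly C} => p`_4) H.
by rewrite /= !coefP5 /=.
Qed.

Lemma size3_Q3 {R : comNzRingType} (p : {poly R}) : (size p <= 3)%N -> p = Q3 p`_0 p`_1 p`_2.
Proof.
move=> sp; apply/polyP => i; rewrite coefQ3.
case: i => [|[|[|i]]] //=; rewrite nth_nil nth_default //.
by apply: leq_trans sp _.
Qed.

Lemma ev2_Q3 (A B D : {poly C}) x u :
  ev2 (Q3 D B A) x u = A.[x] * u ^+ 2 + B.[x] * u + D.[x].
Proof. rewrite /ev2 /Q3 !hornerE /=; ring. Qed.

Lemma horner_Q3 (a b c x : C) : (Q3 a b c).[x] = a + b * x + c * x ^+ 2.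
Proof. rewrite /Q3 !hornerE /=; ring. Qed.

Lemma discE p q s t v w :
  (Q3 v t q) ^+ 2 - 4%:R * Q3 s q p * Q3 w v s =
  P5 (v ^+ 2 - 4%:R * s * w) (2%:R * v * t - 4%:R * (q * w + s * v))
     (t ^+ 2 - 2%:R * v * q - 4%:R * p * w - 4%:R * s ^+ 2)
     (2%:R * t * q - 4%:R * (p * v + q * s)) (q ^+ 2 - 4%:R * p * s).
Proof. rewrite /Q3 /P5; ring. Qed.

End Gen.
Arguments P5 {C}.

Definition Fh {C : comNzRingType} (p q s t v w x u : C) :=
  (s + q * x + p * x ^+ 2) * u ^+ 2 + (v + t * x + q * x ^+ 2) * u + (w + v * x + s * x ^+ 2).

Lemma reduce (C : comNzRingType) (h : {poly {poly C}}) :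
  deg2_each h -> swapXY h = h ->
  exists p q s t v w : C, h = Q3 (Q3 w v s) (Q3 v t q) (Q3 s q p).
Proof.
move=> [sh si] sw.
have sy i j : h`_i`_j = h`_j`_i by rewrite -{1}sw coef_swapXY.
exists h`_2`_2, h`_2`_1, h`_2`_0, h`_1`_1, h`_1`_0, h`_0`_0.
rewrite {1}(size3_Q3 _ sh) {1}(size3_Q3 _ (si 0%N)) {1}(size3_Q3 _ (si 1%N)) {1}(size3_Q3 _ (si 2%N)).
by rewrite (sy 0%N 1%N) (sy 0%N 2%N) (sy 1%N 2%N).
Qed.

Lemma ev2_F (C : comNzRingType) (p q s t v w x u : C) :
  ev2 (Q3 (Q3 w v s) (Q3 v t q) (Q3 s q p)) x u = Fh p q s t v w x u.
Proof. by rewrite ev2_Q3 !horner_Q3 /Fh. Qed.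


Section Alg.
Variable C : numClosedFieldType.

Lemma n2 : (2 : C) != 0. Proof. by rewrite pnatr_eq0. Qed.
Lemma n4 : (4 : C) != 0. Proof. by rewrite pnatr_eq0. Qed.

Lemma sq0 (x : C) : x ^+ 2 = 0 -> x = 0.
Proof. by move/eqP; rewrite expf_eq0 => /andP[_ /eqP]. Qed.

Lemma eq_from (k : C) {a b c d : C} : a = b -> c - d = k * (a - b) -> c = d.
Proof. by move=> ->; rewrite subrr mulr0 => /eqP; rewrite subr_eq0 => /eqP. Qed.

Lemma prod0 (x y : C) : x * y = 0 -> x = 0 \/ y = 0.
Proof. by move/eqP; rewrite mulf_eq0 => /orP[/eqP|/eqP]; [left|right]. Qed.

Lemma case0 (p q s t v w : C) :
  v ^+ 2 - 4 * s * w = 0 -> 2 * v * t - 4 * (q * w + s * v) = 0 ->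
  t ^+ 2 - 2 * v * q - 4 * p * w - 4 * s ^+ 2 = 0 ->
  2 * t * q - 4 * (p * v + q * s) = 0 -> q ^+ 2 - 4 * p * s = 0 ->
  (exists a : C, a != 0 /\ forall x u, Fh p q s t v w x u = (x - u) ^+ 2 / a)
  \/ (exists g0 g1 g2 : C, forall x u,
        Fh p q s t v w x u = (g0 * x * u + g1 * (x + u) + g2) ^+ 2).
Proof.
move=> E0 E1 E2 E3 E4.
have [s0|s0] := eqVneq s 0.
  subst s.
  have q0 : q = 0 by apply: sq0; apply: (etrans _ E4); ring.
  have v0 : v = 0 by apply: sq0; apply: (etrans _ E0); ring.
  subst q v.
  move: (sqrtC p) (sqrtCK p) (sqrtC w) (sqrtCK w) => g0 hp g2 hw.
  subst p w.
  have /prod0[ht|ht] : (t - 2 * g0 * g2) * (t + 2 * g0 * g2) = 0.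
      by apply: (etrans _ E2); ring.
    right; exists g0, 0, g2 => x u; rewrite /Fh.
    have -> : t = 2 * g0 * g2 by apply/eqP; rewrite -subr_eq0 ht.
    ring.
  right; exists g0, 0, (- g2) => x u; rewrite /Fh.
  have -> : t = - (2 * g0 * g2) by apply/eqP; rewrite -subr_eq0 opprK ht.
  ring.
have hp : p = q ^+ 2 / (4 * s).
  have e : q ^+ 2 = 4 * p * s by apply/eqP; rewrite -subr_eq0 E4.
  by rewrite e; field.
have hw : w = v ^+ 2 / (4 * s).
  have e : v ^+ 2 = 4 * s * w by apply/eqP; rewrite -subr_eq0 E0.
  by rewrite e; field.
subst p w.
set T := q * v / (2 * s) + 2 * s.
have [tT|tT] := eqVneq t T.
  move: (sqrtC s) (sqrtCK s) => g1 hs; subst s.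
  have g10 : g1 != 0 by apply: contra s0 => /eqP ->; rewrite expr0n.
  right; exists (q / (2 * g1)), g1, (v / (2 * g1)) => x u.
  rewrite /Fh tT /T; field.
  by [].
have q0 : q = 0.
  have /prod0[] : (2 * q) * (t - T) = 0 by apply: (etrans _ E3); rewrite /T; field.
    by move/prod0 => [/eqP|//]; rewrite (negPf n2).
  by move/eqP; rewrite subr_eq0 (negPf tT).
have v0 : v = 0.
  have /prod0[] : (2 * v) * (t - T) = 0 by apply: (etrans _ E1); rewrite /T; field.
    by move/prod0 => [/eqP|//]; rewrite (negPf n2).
  by move/eqP; rewrite subr_eq0 (negPf tT).
subst q v.
have ht : t = - 2 * s.
  have /prod0[] : (t - T) * (t + T) = 0 by apply: (etrans _ E2); rewrite /T; field.
    by move/eqP; rewrite subr_eq0 (negPf tT).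
  by move/eqP; rewrite addr_eq0 => /eqP ->; rewrite /T; field.
left; exists (1 / s); split; first by rewrite div1r invr_eq0.
by move=> x u; rewrite /Fh ht; field.
Qed.

Lemma case1 (p q s t v w : C) :
  v ^+ 2 - 4 * s * w = 1 -> 2 * v * t - 4 * (q * w + s * v) = 0 ->
  t ^+ 2 - 2 * v * q - 4 * p * w - 4 * s ^+ 2 = 0 ->
  2 * t * q - 4 * (p * v + q * s) = 0 -> q ^+ 2 - 4 * p * s = 0 ->
  (exists a : C, a != 0 /\ forall x u,
        Fh p q s t v w x u = (x - u) ^+ 2 / (2 * a) - a / 2)
  \/ (exists g0 g1 g2 : C, g1 ^+ 2 - 4 * g0 * g2 = 1 /\ forall x u,
        Fh p q s t v w x u = g0 * (x + u) ^+ 2 + g1 * (x + u) + g2).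
Proof.
move=> E0 E1 E2 E3 E4.
have [s0|s0] := eqVneq s 0.
  subst s.
  have q0 : q = 0 by apply: sq0; apply: (etrans _ E4); ring.
  subst q.
  have v1 : v ^+ 2 = 1 by rewrite -E0; ring.
  have v0 : v != 0 by apply/eqP => v0; move: v1; rewrite v0 expr0n => /eqP; rewrite eq_sym oner_eq0.
  have p0 : p = 0.
    have /prod0[] : (- 4 * v) * p = 0 by apply: (etrans _ E3); ring.
      by move/prod0 => [/eqP|/eqP]; rewrite ?oppr_eq0 ?(negPf n4) ?(negPf v0).
    by [].
  subst p.
  have t0 : t = 0 by apply: sq0; apply: (etrans _ E2); ring.
  subst t.
  right; exists 0, v, w; split; first by rewrite -v1; ring.
  by move=> x u; rewrite /Fh; ring.
have hp : p = q ^+ 2 / (4 * s).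
  have e : q ^+ 2 = 4 * p * s by apply/eqP; rewrite -subr_eq0 E4.
  by rewrite e; field.
have hw : w = (v ^+ 2 - 1) / (4 * s).
  have e : v ^+ 2 - 1 = 4 * s * w by rewrite -[X in _ - X]E0; ring.
  by rewrite e; field.
subst p w.
set T := q * v / (2 * s) + 2 * s.
have q0 : q = 0.
  apply/eqP; apply/negP => /negP q0.
  have tT : t = T.
    have /prod0[] : (2 * q) * (t - T) = 0 by apply: (etrans _ E3); rewrite /T; field.
      by move/prod0 => [/eqP|/eqP]; rewrite ?(negPf n2) ?(negPf q0).
    by move/eqP; rewrite subr_eq0 => /eqP.
  have : q / s = 0 by apply: (etrans _ E1); rewrite tT /T; field.
  by move/eqP; rewrite mulf_eq0 invr_eq0 (negPf q0) (negPf s0).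
subst q.
have [ts|ts] := eqVneq t (2 * s).
  right; exists s, v, ((v ^+ 2 - 1) / (4 * s)); split; first by field.
  by move=> x u; rewrite /Fh ts; field.
have v0 : v = 0.
  have /prod0[] : (2 * v) * (t - 2 * s) = 0 by apply: (etrans _ E1); field.
    by move/prod0 => [/eqP|//]; rewrite (negPf n2).
  by move/eqP; rewrite subr_eq0 (negPf ts).
subst v.
have ht : t = - (2 * s).
  have /prod0[] : (t - 2 * s) * (t + 2 * s) = 0 by apply: (etrans _ E2); field.
    by move/eqP; rewrite subr_eq0 (negPf ts).
  by move/eqP; rewrite addr_eq0 => /eqP.
left; exists (1 / (2 * s)); split; first by rewrite div1r invr_eq0 mulf_neq0 ?n2.
by move=> x u; rewrite /Fh ht; field.
Qed.


Lemma casex (p q s t v w : C) :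
  v ^+ 2 - 4 * s * w = 0 -> 2 * v * t - 4 * (q * w + s * v) = 1 ->
  t ^+ 2 - 2 * v * q - 4 * p * w - 4 * s ^+ 2 = 0 ->
  2 * t * q - 4 * (p * v + q * s) = 0 -> q ^+ 2 - 4 * p * s = 0 ->
  exists a : C, a != 0 /\ forall x u,
        Fh p q s t v w x u = (x - u) ^+ 2 / (4 * a) - a / 2 * (x + u) + a ^+ 3 / 4.
Proof.
move=> E0 E1 E2 E3 E4.
have [s0|s0] := eqVneq s 0.
  subst s.
  have q0 : q = 0 by apply: sq0; apply: (etrans _ E4); ring.
  have v0 : v = 0 by apply: sq0; apply: (etrans _ E0); ring.
  subst q v.
  have : (1 : C) = 0 by rewrite -E1; ring.
  by move/eqP; rewrite oner_eq0.
have hp : p = q ^+ 2 / (4 * s).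
  have e : q ^+ 2 = 4 * p * s by apply/eqP; rewrite -subr_eq0 E4.
  by rewrite e; field.
have hw : w = v ^+ 2 / (4 * s).
  have e : v ^+ 2 = 4 * s * w by apply/eqP; rewrite -subr_eq0 E0.
  by rewrite e; field.
subst p w.
set T := q * v / (2 * s) + 2 * s.
have tT : t - T != 0.
  apply/eqP => tT.
  have : (2 * v) * (t - T) = 1 by apply: (etrans _ E1); rewrite /T; field.
  by rewrite tT mulr0 => /eqP; rewrite eq_sym oner_eq0.
have q0 : q = 0.
  have /prod0[] : (2 * q) * (t - T) = 0 by apply: (etrans _ E3); rewrite /T; field.
    by move/prod0 => [/eqP|//]; rewrite (negPf n2).
  by move/eqP; rewrite (negPf tT).
subst q.
have ht : t = - (2 * s).
  have /prod0[] : (t - T) * (t + T) = 0 by apply: (etrans _ E2); rewrite /T; field.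
    by move/eqP; rewrite (negPf tT).
  by move/eqP; rewrite addr_eq0 => /eqP ->; rewrite /T; field.
subst t.
have hv : v = - (1 / (8 * s)).
  have e : 1 = - (8 * s) * v by rewrite -[X in X = _]E1 /T; field.
  by rewrite [X in - (X / _)]e; field.
subst v.
exists (1 / (4 * s)); split; first by rewrite div1r invr_eq0 mulf_neq0 ?n4.
by move=> x u; rewrite /Fh; field.
Qed.

Lemma quad_param {s t : C} : s != 0 -> t ^+ 2 - 4 * s ^+ 2 = 1 ->
  exists a : C, [/\ a != 0, a ^+ 2 != 1, s = a / (1 - a ^+ 2) &
     t = - (1 + a ^+ 2) / (1 - a ^+ 2)].
Proof.
move=> s0 E.
have t1 : 1 + t != 0.
  apply/eqP => t1; have ht : t = -1 by apply: (addrI 1); rewrite t1; ring.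
  move: E; rewrite ht => E.
  have : s ^+ 2 = 0 by apply: (eq_from (- 1 / 4) E); field.
  by move/sq0/eqP; rewrite (negPf s0).
have : exists a, a = - (1 + t) / (2 * s) by eexists.
case=> a ha.
have a0 : a != 0 by rewrite ha mulf_neq0 ?oppr_eq0 // invr_eq0 mulf_neq0 ?n2.
have rel : s * a ^+ 2 + a - s = 0.
  by rewrite ha; apply: (eq_from (1 / (4 * s)) E); field.
have e : a = s * (1 - a ^+ 2) by apply/eqP; rewrite -subr_eq0 -rel; apply/eqP; ring.
have a1 : 1 - a ^+ 2 != 0.
  by apply: contra a0 => /eqP z; rewrite e z mulr0.
exists a; split => //.
- by apply: contra a1 => /eqP ->; rewrite subrr.
- by rewrite [X in X / _]e; field.
- have hs : s = a / (1 - a ^+ 2) by rewrite [X in X / _]e; field.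
  have ht : t = - 1 - 2 * a * s by rewrite ha; field.
  by rewrite ht hs; field.
Qed.


Lemma casex2 (p q s t v w : C) :
  v ^+ 2 - 4 * s * w = 0 -> 2 * v * t - 4 * (q * w + s * v) = 0 ->
  t ^+ 2 - 2 * v * q - 4 * p * w - 4 * s ^+ 2 = 1 ->
  2 * t * q - 4 * (p * v + q * s) = 0 -> q ^+ 2 - 4 * p * s = 0 ->
  (exists g0 g1 g2 : C, g1 ^+ 2 - 4 * g0 * g2 = 1 /\ forall x u,
        Fh p q s t v w x u = g0 * x ^+ 2 * u ^+ 2 + g1 * x * u + g2)
  \/ (exists a : C, a != 0 /\ a ^+ 2 != 1 /\ forall x u,
        Fh p q s t v w x u = a / (1 - a ^+ 2) * (x ^+ 2 + u ^+ 2)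
                       - (1 + a ^+ 2) / (1 - a ^+ 2) * x * u).
Proof.
move=> E0 E1 E2 E3 E4.
have [s0|s0] := eqVneq s 0.
  subst s.
  have q0 : q = 0 by apply: sq0; apply: (etrans _ E4); ring.
  have v0 : v = 0 by apply: sq0; apply: (etrans _ E0); ring.
  subst q v.
  left; exists p, t, w; split; first by apply: (eq_from 1 E2); ring.
  by move=> x u; rewrite /Fh; ring.
have hp : p = q ^+ 2 / (4 * s).
  have e : q ^+ 2 = 4 * p * s by apply/eqP; rewrite -subr_eq0 E4.
  by rewrite e; field.
have hw : w = v ^+ 2 / (4 * s).
  have e : v ^+ 2 = 4 * s * w by apply/eqP; rewrite -subr_eq0 E0.
  by rewrite e; field.
subst p w.
set T := q * v / (2 * s) + 2 * s.
have tT : t - T != 0.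
  apply/eqP => tT.
  have : (t - T) * (t + T) = 1 by apply: (etrans _ E2); rewrite /T; field.
  by rewrite tT mul0r => /eqP; rewrite eq_sym oner_eq0.
have q0 : q = 0.
  have /prod0[] : (2 * q) * (t - T) = 0 by apply: (etrans _ E3); rewrite /T; field.
    by move/prod0 => [/eqP|//]; rewrite (negPf n2).
  by move/eqP; rewrite (negPf tT).
have v0 : v = 0.
  have /prod0[] : (2 * v) * (t - T) = 0 by apply: (etrans _ E1); rewrite /T; field.
    by move/prod0 => [/eqP|//]; rewrite (negPf n2).
  by move/eqP; rewrite (negPf tT).
subst q v.
have E : t ^+ 2 - 4 * s ^+ 2 = 1 by apply: (eq_from 1 E2); field.
have [a [a0 a1 hs ht]] := quad_param s0 E.
have a1' : 1 - a ^+ 2 != 0 by apply: contra a1 => /eqP z; rewrite eq_sym -subr_eq0 z.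
right; exists a; split => //; split => //.
by move=> x u; rewrite /Fh ht hs; field; rewrite a1' a0.
Qed.

Lemma casexd (d p q s t v w : C) : d != 0 ->
  v ^+ 2 - 4 * s * w = - d ^+ 2 -> 2 * v * t - 4 * (q * w + s * v) = 0 ->
  t ^+ 2 - 2 * v * q - 4 * p * w - 4 * s ^+ 2 = 1 ->
  2 * t * q - 4 * (p * v + q * s) = 0 -> q ^+ 2 - 4 * p * s = 0 ->
  exists a : C, a != 0 /\ a ^+ 2 != 1 /\ forall x u,
        Fh p q s t v w x u = a / (1 - a ^+ 2) * (x ^+ 2 + u ^+ 2)
                    - (1 + a ^+ 2) / (1 - a ^+ 2) * x * u
                    + d ^+ 2 * (1 - a ^+ 2) / (4 * a).
Proof.
move=> d0 E0 E1 E2 E3 E4.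
have [s0|s0] := eqVneq s 0.
  subst s.
  have q0 : q = 0 by apply: sq0; apply: (etrans _ E4); ring.
  subst q.
  have v0 : v != 0.
    apply/eqP => v0; subst v.
    have : d ^+ 2 = 0 by apply: (eq_from 1 E0); ring.
    by move/sq0/eqP; rewrite (negPf d0).
  have p0 : p = 0.
    have /prod0[] : (- 4 * v) * p = 0 by apply: (etrans _ E3); ring.
      by move/prod0 => [/eqP|/eqP]; rewrite ?oppr_eq0 ?(negPf n4) ?(negPf v0).
    by [].
  subst p.
  have t0 : t = 0.
    have /prod0[] : (2 * v) * t = 0 by apply: (etrans _ E1); ring.
      by move/prod0 => [/eqP|/eqP]; rewrite ?(negPf n2) ?(negPf v0).
    by [].
  subst t.
  have : (1 : C) = 0 by apply: (eq_from (-1) E2); ring.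
  by move/eqP; rewrite oner_eq0.
have hp : p = q ^+ 2 / (4 * s).
  have e : q ^+ 2 = 4 * p * s by apply/eqP; rewrite -subr_eq0 E4.
  by rewrite e; field.
have hw : w = (v ^+ 2 + d ^+ 2) / (4 * s).
  have e : v ^+ 2 + d ^+ 2 = 4 * s * w by apply: (eq_from 1 E0); ring.
  by rewrite e; field.
subst p w.
set T := q * v / (2 * s) + 2 * s.
have q0 : q = 0.
  apply/eqP; apply/negP => /negP q0.
  have tT : t = T.
    have /prod0[] : (2 * q) * (t - T) = 0 by apply: (etrans _ E3); rewrite /T; field.
      by move/prod0 => [/eqP|/eqP]; rewrite ?(negPf n2) ?(negPf q0).
    by move/eqP; rewrite subr_eq0 => /eqP.
  have : q * d ^+ 2 / s = 0 by apply: (eq_from (-1) E1); rewrite tT /T; field.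
  move/eqP; rewrite !mulf_eq0 invr_eq0 (negPf q0) (negPf s0) /=.
  by rewrite (negPf d0).
subst q.
have E : t ^+ 2 - 4 * s ^+ 2 = 1 by apply: (eq_from 1 E2); field.
have ts : t - 2 * s != 0.
  apply/eqP => ts.
  have : (t - 2 * s) * (t + 2 * s) = 1 by apply: (etrans _ E); ring.
  by rewrite ts mul0r => /eqP; rewrite eq_sym oner_eq0.
have v0 : v = 0.
  have /prod0[] : (2 * v) * (t - 2 * s) = 0 by apply: (etrans _ E1); field.
    by move/prod0 => [/eqP|//]; rewrite (negPf n2).
  by move/eqP; rewrite (negPf ts).
subst v.
have [a [a0 a1 hs ht]] := quad_param s0 E.
have a1' : 1 - a ^+ 2 != 0 by apply: contra a1 => /eqP z; rewrite eq_sym -subr_eq0 z.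
exists a; split => //; split => //.
by move=> x u; rewrite /Fh ht hs; field; rewrite a1' a0.
Qed.


Lemma casecub (g2 g3 p q s t v w : C) :
  v ^+ 2 - 4 * s * w = - g3 -> 2 * v * t - 4 * (q * w + s * v) = - g2 ->
  t ^+ 2 - 2 * v * q - 4 * p * w - 4 * s ^+ 2 = 0 ->
  2 * t * q - 4 * (p * v + q * s) = 4 -> q ^+ 2 - 4 * p * s = 0 ->
  exists a sg : C, sg ^+ 2 = 4 * a ^+ 3 - g2 * a - g3 /\ sg != 0 /\ forall x u,
        Fh p q s t v w x u = ((x * u + a * (x + u) + g2 / 4) ^+ 2
                     - (x + u + a) * (4 * a * x * u - g3)) / sg.
Proof.
move=> E0 E1 E2 E3 E4.
have p0 : p != 0.
  apply/eqP => p0; subst p.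
  have q0 : q = 0 by apply: sq0; apply: (etrans _ E4); ring.
  subst q.
  have : (4 : C) = 0 by rewrite -E3; ring.
  by move/eqP; rewrite (negPf n4).
have [sg [sg0 hp]] : exists sg : C, sg != 0 /\ p = 1 / sg.
  by exists p^-1; rewrite invr_eq0 p0; split => //; field.
subst p.
have [a hq] : exists a : C, q = - 2 * a / sg.
  by exists (- q * sg / 2); field.
subst q.
have hs : s = a ^+ 2 / sg by apply: (eq_from (- sg / 4) E4); field.
subst s.
have hv : v = 2 * a ^+ 3 / sg - a * t - sg by apply: (eq_from (- sg / 4) E3); field.
subst v.
have hw : w = sg * (t ^+ 2 - 2 * (2 * a ^+ 3 / sg - a * t - sg) * (- 2 * a / sg)
                     - 4 * (a ^+ 2 / sg) ^+ 2) / 4.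
  by apply: (eq_from (- sg / 4) E2); field.
subst w.
have ht : t = (g2 - 4 * a ^+ 2) / (2 * sg).
  by apply: (eq_from (- 1 / (2 * sg)) E1); field.
subst t.
have hg : sg ^+ 2 = 4 * a ^+ 3 - g2 * a - g3 by apply: (eq_from 1 E0); field.
exists a, sg; split => //; split => //.
have hg3 : g3 = 4 * a ^+ 3 - g2 * a - sg ^+ 2 by rewrite hg; ring.
clear hg; subst g3.
by move=> x u; rewrite /Fh; field.
Qed.

End Alg.
Arguments case0 {C p q s t v w}.
Arguments case1 {C p q s t v w}.
Arguments casex {C p q s t v w}.
Arguments casex2 {C p q s t v w}.
Arguments casexd {C d p q s t v w}.
Arguments casecub {C g2 g3 p q s t v w}.



Theorem proposition4 (C : numClosedFieldType) (h : {poly {poly C}}) :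
  deg2_each h -> swapXY h = h ->
  (
   (* r = 0 *)
   (disc h = 0 ->
     (exists a : C, a != 0 /\ forall x u, ev2 h x u = (x - u) ^+ 2 / a)
     \/ (exists g0 g1 g2 : C, forall x u,
           ev2 h x u = (g0 * x * u + g1 * (x + u) + g2) ^+ 2))
   /\ (* r = 1 *)
   (disc h = 1 ->
     (exists a : C, a != 0 /\ forall x u,
        ev2 h x u = (x - u) ^+ 2 / (2 * a) - a / 2)
     \/ (exists g0 g1 g2 : C, g1 ^+ 2 - 4 * g0 * g2 = 1 /\ forall x u,
           ev2 h x u = g0 * (x + u) ^+ 2 + g1 * (x + u) + g2))
   /\ (* r = x *)
   (disc h = ('X)%:P ->
     exists a : C, a != 0 /\ forall x u,
        ev2 h x u = (x - u) ^+ 2 / (4 * a) - a / 2 * (x + u) + a ^+ 3 / 4)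
   /\    (* r = x^2 *)
   (disc h = ('X ^+ 2)%:P ->
     (exists g0 g1 g2 : C, g1 ^+ 2 - 4 * g0 * g2 = 1 /\ forall x u,
           ev2 h x u = g0 * x ^+ 2 * u ^+ 2 + g1 * x * u + g2)
     \/ (exists a : C, a != 0 /\ a ^+ 2 != 1 /\ forall x u,
           ev2 h x u = a / (1 - a ^+ 2) * (x ^+ 2 + u ^+ 2)
                       - (1 + a ^+ 2) / (1 - a ^+ 2) * x * u))
   /\    (* r = x^2 - delta^2, delta <> 0 *)
   (forall d : C, d != 0 ->
   disc h = ('X ^+ 2 - (d ^+ 2)%:P)%:P ->
     exists a : C, a != 0 /\ a ^+ 2 != 1 /\ forall x u,
        ev2 h x u = a / (1 - a ^+ 2) * (x ^+ 2 + u ^+ 2)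
                    - (1 + a ^+ 2) / (1 - a ^+ 2) * x * u
                    + d ^+ 2 * (1 - a ^+ 2) / (4 * a))
   /\    (* r = 4x^3 - g2 x - g3, g2^3 - 27 g3^2 <> 0 *)
   (forall g2 g3 : C, g2 ^+ 3 - 27 * g3 ^+ 2 != 0 ->
   let r := 4%:P * 'X ^+ 3 - g2%:P * 'X - g3%:P in
   disc h = r%:P ->
     exists a s : C, s ^+ 2 = r.[a] /\ s != 0 /\ forall x u,
        ev2 h x u = ((x * u + a * (x + u) + g2 / 4) ^+ 2
                     - (x + u + a) * (4 * a * x * u - g3)) / s)).

Proof.
move=> hd hsw.
have [p [q [s [t [v [w hh]]]]]] := reduce _ _ hd hsw.
have hev x u : ev2 h x u = Fh p q s t v w x u by rewrite hh ev2_F.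
have key a b c d e : disc h = (P5 a b c d e)%:P ->
  [/\ v ^+ 2 - 4 * s * w = a, 2 * v * t - 4 * (q * w + s * v) = b,
      t ^+ 2 - 2 * v * q - 4 * p * w - 4 * s ^+ 2 = c,
      2 * t * q - 4 * (p * v + q * s) = d & q ^+ 2 - 4 * p * s = e].
  by rewrite hh disc_Q3 discE => /polyC_inj /P5_inj.
split.
  move=> D.
  have /key[E0 E1 E2 E3 E4] : disc h = (P5 0 0 0 0 0)%:P by rewrite D /P5; ring.
  have [[a [a0 H]]|[g0 [g1 [g2 H]]]] := case0 E0 E1 E2 E3 E4.
    by left; exists a; split => // x u; rewrite hev H.
  by right; exists g0, g1, g2 => x u; rewrite hev H.
split.
  move=> D.
  have /key[E0 E1 E2 E3 E4] : disc h = (P5 1 0 0 0 0)%:P by rewrite D /P5; ring.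
  have [[a [a0 H]]|[g0 [g1 [g2 [G H]]]]] := case1 E0 E1 E2 E3 E4.
    by left; exists a; split => // x u; rewrite hev H.
  by right; exists g0, g1, g2; split => // x u; rewrite hev H.
split.
  move=> D.
  have /key[E0 E1 E2 E3 E4] : disc h = (P5 0 1 0 0 0)%:P by rewrite D /P5; ring.
  have [a [a0 H]] := casex E0 E1 E2 E3 E4.
  by exists a; split => // x u; rewrite hev H.
split.
  move=> D.
  have /key[E0 E1 E2 E3 E4] : disc h = (P5 0 0 1 0 0)%:P by rewrite D /P5; ring.
  have [[g0 [g1 [g2 [G H]]]]|[a [a0 [a1 H]]]] := casex2 E0 E1 E2 E3 E4.
    by left; exists g0, g1, g2; split => // x u; rewrite hev H.
  by right; exists a; split => //; split => // x u; rewrite hev H.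
split.
  move=> d d0 D.
  have /key[E0 E1 E2 E3 E4] : disc h = (P5 (- d ^+ 2) 0 1 0 0)%:P by rewrite D /P5; ring.
  have [a [a0 [a1 H]]] := casexd d0 E0 E1 E2 E3 E4.
  by exists a; split => //; split => // x u; rewrite hev H.
move=> g2 g3 _ r D.
have /key[E0 E1 E2 E3 E4] : disc h = (P5 (- g3) (- g2) 0 4 0)%:P by rewrite D /r /P5; ring.
have [a [sg [G [sg0 H]]]] := casecub E0 E1 E2 E3 E4.
exists a, sg; split; first by rewrite G /r !hornerE.
by split => // x u; rewrite hev H.
Qed.
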